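(* Consider the system on the projected Kasner state space in the context and a solution with $\Sigma_A\Sigma_C\neq0$ initially. Then its $\alpha$-limit set is contained in the closed arc $\{\Sigma_A=\Sigma_C=0,\ \Sigma_+^2+\Sigma_B^2=1,\ -1\le\Sigma_+\le-\tfrac12,\ 0\le\Sigma_B\le\tfrac{\sqrt3}{2}\}$, and its $\omega$-limit set is contained in the closed arc $\{\Sigma_A=\Sigma_C=0,\ \Sigma_+^2+\Sigma_B^2=1,\ \tfrac12\le\Sigma_+\le1,\ -\tfrac{\sqrt3}{2}\le\Sigma_B\le0\}$.
   Context: The projected Kasner system is the ODE system for $(\Sigma_+,\Sigma_A,\Sigma_B,\Sigma_C)\in\mathbb R^4$ restricted to the invariant sphere $\Sigma_+^2+\Sigma_A^2+\Sigma_B^2+\Sigma_C^2=1$: $\Sigma_+'=3\Sigma_A^2$, $\Sigma_A'=-(3\Sigma_++\sqrt3\Sigma_B)\Sigma_A$, $\Sigma_B'=\sqrt3\Sigma_A^2-2\sqrt3\Sigma_C^2$, $\Sigma_C'=2\sqrt3\Sigma_B\Sigma_C$, where $'$ denotes $d/d\tau$, $\tau\in\mathbb R$. *)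

(* Defs.v *)
From Stdlib Require Import Reals Lra.
Open Scope R_scope.

Record state := mkState { Sp : R; SA : R; SB : R; SC : R }.

Definition on_sphere (x : state) : Prop :=
  Sp x ^ 2 + SA x ^ 2 + SB x ^ 2 + SC x ^ 2 = 1.

Definition kasner_field (x : state) : state :=
  mkState (3 * SA x ^ 2)
          (- (3 * Sp x + sqrt 3 * SB x) * SA x)
          (sqrt 3 * SA x ^ 2 - 2 * sqrt 3 * SC x ^ 2)
          (2 * sqrt 3 * SB x * SC x).

Definition is_solution (x : R -> state) : Prop :=
  (forall t, on_sphere (x t)) /\
  (forall t, derivable_pt_lim (fun s => Sp (x s)) t (Sp (kasner_field (x t)))) /\
  (forall t, derivable_pt_lim (fun s => SA (x s)) t (SA (kasner_field (x t)))) /\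
  (forall t, derivable_pt_lim (fun s => SB (x s)) t (SB (kasner_field (x t)))) /\
  (forall t, derivable_pt_lim (fun s => SC (x s)) t (SC (kasner_field (x t)))).

Definition state_cv (u : nat -> state) (p : state) : Prop :=
  Un_cv (fun n => Sp (u n)) (Sp p) /\ Un_cv (fun n => SA (u n)) (SA p) /\
  Un_cv (fun n => SB (u n)) (SB p) /\ Un_cv (fun n => SC (u n)) (SC p).

Definition omega_limit (x : R -> state) (p : state) : Prop :=
  exists t : nat -> R, cv_infty t /\ state_cv (fun n => x (t n)) p.

Definition alpha_limit (x : R -> state) (p : state) : Prop :=
  exists t : nat -> R, cv_infty (fun n => - t n) /\ state_cv (fun n => x (t n)) p.

Definition alpha_arc (p : state) : Prop :=
  SA p = 0 /\ SC p = 0 /\ Sp p ^ 2 + SB p ^ 2 = 1 /\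
  -1 <= Sp p <= -1/2 /\ 0 <= SB p <= sqrt 3 / 2.

Definition omega_arc (p : state) : Prop :=
  SA p = 0 /\ SC p = 0 /\ Sp p ^ 2 + SB p ^ 2 = 1 /\
  1/2 <= Sp p <= 1 /\ - (sqrt 3 / 2) <= SB p <= 0.

(* Main.v *)
Require Import Defs.
From Stdlib Require Import Reals Lra Psatz.
Open Scope R_scope.

Lemma dpl_ext (f g : R -> R) t l :
  (forall s, f s = g s) -> derivable_pt_lim f t l -> derivable_pt_lim g t l.
Proof.
  intros E H eps Heps. destruct (H eps Heps) as [d Hd]. exists d.
  intros h Hh Hh2. rewrite <- !E. auto.
Qed.

Lemma mvt_mono (f d : R -> R) a b :
  (forall t, derivable_pt_lim f t (d t)) -> a <= b ->
  (forall t, a <= t <= b -> 0 <= d t) -> f a <= f b.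
Proof.
  intros Hd Hab Hpos.
  destruct (Req_dec a b) as [->|Hne]; [lra|].
  pose (pr := fun t => exist (fun l => derivable_pt_abs f t l) (d t) (Hd t) : derivable_pt f t).
  destruct (MVT_cor1 f a b pr) as [c [Hc Hc2]]; [lra|].
  unfold derive_pt, pr in Hc; simpl in Hc.
  assert (0 <= d c) by (apply Hpos; lra).
  nra.
Qed.

Lemma dpl_lin k t : derivable_pt_lim (fun s => k * s) t k.
Proof.
  apply (dpl_ext (mult_real_fct k id)). { intros; reflexivity. }
  replace k with (k * 1) at 2 by ring. apply derivable_pt_lim_scal, derivable_pt_lim_id.
Qed.

Lemma mvt_lb (f d : R -> R) k a b :
  (forall t, derivable_pt_lim f t (d t)) -> a <= b ->
  (forall t, a <= t <= b -> k <= d t) -> k * (b - a) <= f b - f a.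
Proof.
  intros Hd Hab Hk.
  assert (H := mvt_mono (fun s => f s - k * s) (fun s => d s - k) a b).
  simpl in H. cut (f a - k * a <= f b - k * b). lra.
  apply H; auto.
  - intro t. apply (dpl_ext (minus_fct f (fun s => k * s))). { intros; reflexivity. }
    apply derivable_pt_lim_minus; auto. apply dpl_lin.
  - intros t Ht. specialize (Hk t Ht). lra.
Qed.

Lemma mvt_ub (f d : R -> R) k a b :
  (forall t, derivable_pt_lim f t (d t)) -> a <= b ->
  (forall t, a <= t <= b -> d t <= k) -> f b - f a <= k * (b - a).
Proof.
  intros Hd Hab Hk.
  assert (H := mvt_lb (fun s => - f s) (fun s => - d s) (-k) a b).
  cut ((-k) * (b-a) <= - f b - - f a). lra.
  apply H; auto.
  - intro t. apply (dpl_ext (opp_fct f)). { intros; reflexivity. }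
    apply derivable_pt_lim_opp; auto.
  - intros t Ht. specialize (Hk t Ht). lra.
Qed.

Lemma dpl_sq g dg t : derivable_pt_lim g t dg ->
  derivable_pt_lim (fun s => g s * g s) t (2 * g t * dg).
Proof.
  intros H. replace (2*g t*dg) with (dg * g t + g t * dg) by ring.
  apply (dpl_ext (mult_fct g g)). { intros; reflexivity. }
  apply derivable_pt_lim_mult; auto.
Qed.

Lemma dpl_expw h dh c t : derivable_pt_lim h t dh ->
  derivable_pt_lim (fun s => h s * exp (c * s)) t ((dh + c * h t) * exp (c * t)).
Proof.
  intros H. replace ((dh + c * h t) * exp (c * t)) with (dh * exp (c*t) + h t * (exp (c*t) * c)) by ring.
  apply (dpl_ext (mult_fct h (comp exp (fun s => c * s)))). { intros; reflexivity. }
  change (derivable_pt_lim (mult_fct h (comp exp (fun s => c * s))) t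
    (dh * comp exp (fun s => c * s) t + h t * (exp (c * t) * c))).
  apply derivable_pt_lim_mult; auto.
  apply (derivable_pt_lim_comp (fun s => c*s) exp t c (exp (c*t))). apply dpl_lin. apply derivable_pt_lim_exp.
Qed.

Lemma nonvanish g dg c t0 :
  (forall t, derivable_pt_lim g t (dg t)) ->
  (forall t, t0 <= t -> - c * (g t * g t) <= 2 * g t * dg t) ->
  g t0 <> 0 -> forall t, t0 <= t -> g t <> 0.
Proof.
  intros Hd Hc H0 t Ht Hz.
  assert (M := mvt_mono (fun s => g s * g s * exp (c * s))
            (fun s => (2 * g s * dg s + c * (g s * g s)) * exp (c * s)) t0 t).
  simpl in M. rewrite Hz in M.
  assert (0 < g t0 * g t0 * exp (c * t0)).
  { apply Rmult_lt_0_compat. nra. apply exp_pos. }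
  assert (g t0 * g t0 * exp (c * t0) <= 0 * 0 * exp (c * t)); [|nra].
  apply M; auto.
  - intro s. apply dpl_expw with (h := fun s => g s * g s). apply dpl_sq; auto.
  - intros s Hs. apply Rmult_le_pos. specialize (Hc s (proj1 Hs)). lra. left; apply exp_pos.
Qed.

Lemma cont_of (f d : R -> R) : (forall t, derivable_pt_lim f t (d t)) -> continuity f.
Proof.
  intros Hd t. apply derivable_continuous_pt.
  exact (exist (fun l => derivable_pt_abs f t l) (d t) (Hd t)).
Qed.

Definition tends (g : R -> R) (l : R) : Prop :=
  forall eps, 0 < eps -> exists T, forall t, T <= t -> - eps < g t - l < eps.

Lemma barbalat F G dG c M tn l :
  (forall t, derivable_pt_lim F t (c * (G t * G t))) -> 0 < c ->
  (forall t, derivable_pt_lim G t (dG t)) -> (forall t, - M <= dG t <= M) -> 0 < M ->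
  cv_infty tn -> Un_cv (fun n => F (tn n)) l -> tends G 0.
Proof.
  intros HF Hc HG HM HM0 Htn Hl.
  assert (Fmono: forall a b, a <= b -> F a <= F b).
  { intros a b Hab. apply (mvt_mono F (fun t => c*(G t*G t))); auto. intros; nra. }
  assert (Fle: forall t, F t <= l).
  { intros t. destruct (Rle_dec (F t) l) as [|Hn]; auto. exfalso.
    destruct (Hl (F t - l)) as [N1 HN1]; [lra|].
    destruct (Htn t) as [N2 HN2].
    specialize (HN1 (max N1 N2) (Nat.le_max_l _ _)). specialize (HN2 (max N1 N2) (Nat.le_max_r _ _)).
    unfold R_dist in HN1. apply Rabs_def2 in HN1.
    assert (F t <= F (tn (max N1 N2))) by (apply Fmono; lra). lra. }
  intros eps Heps.
  set (d := eps / (2 * M)).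
  assert (Hd : 0 < d) by (unfold d; apply Rdiv_lt_0_compat; lra).
  assert (HMd : M * d = eps / 2) by (unfold d; field; lra).
  set (k := c * (eps/2 * (eps/2)) * d).
  assert (Hk : 0 < k) by (unfold k; apply Rmult_lt_0_compat; [apply Rmult_lt_0_compat|]; nra).
  destruct (Hl k Hk) as [N HN]. exists (tn N). intros t Ht.
  specialize (HN N (le_n _)). unfold R_dist in HN. apply Rabs_def2 in HN.
  destruct (Rlt_dec (-eps) (G t - 0)) as [H1|H1]; destruct (Rlt_dec (G t - 0) eps) as [H2|H2];
    try (split; assumption); exfalso.
  all: assert (Hsq : forall u, t <= u <= t + d -> eps/2 * (eps/2) <= G u * G u).
  all: try (intros u Hu;
    assert (A1 := mvt_lb G dG (-M) t u HG (proj1 Hu) (fun s _ => proj1 (HM s)));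
    assert (A2 := mvt_ub G dG M t u HG (proj1 Hu) (fun s _ => proj2 (HM s)));
    assert (M * (u - t) <= eps / 2) by (rewrite <- HMd; apply Rmult_le_compat_l; lra);
    nra).
  all: assert (B := mvt_lb F (fun t => c * (G t * G t)) (c * (eps/2 * (eps/2))) t (t + d) HF
            ltac:(lra) ltac:(intros s Hs; apply Rmult_le_compat_l; [lra| apply Hsq; auto])).
  all: assert (F (tn N) <= F t) by (apply Fmono; lra).
  all: assert (F (t + d) <= l) by apply Fle.
  all: unfold k in HN; replace (t + d - t) with d in B by ring; lra.
Qed.

Lemma sign_persist f df c tn :
  (forall t, derivable_pt_lim f t (df t)) -> 0 < c ->
  tends (fun t => f t * f t) (c * c) -> cv_infty tn -> Un_cv (fun n => f (tn n)) c ->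
  exists T, forall t, T <= t -> 0 < f t.
Proof.
  intros Hd Hc Hsq Htn Hl.
  destruct (Hsq (c*c/2)) as [T1 HT1]; [nra|].
  destruct (Htn T1) as [N1 HN1]. destruct (Hl (c/2)) as [N2 HN2]; [lra|].
  set (n := max N1 N2).
  specialize (HN1 n (Nat.le_max_l _ _)). specialize (HN2 n (Nat.le_max_r _ _)).
  unfold R_dist in HN2. apply Rabs_def2 in HN2.
  exists (tn n). intros t Ht.
  destruct (Rlt_dec 0 (f t)) as [|Hn]; auto. exfalso.
  destruct (Req_dec (f t) 0) as [Hz|Hnz].
  - specialize (HT1 t ltac:(lra)). rewrite Hz in HT1. nra.
  - assert (tn n < t).
    { destruct (Req_dec (tn n) t) as [E|E]; [rewrite E in HN2; lra| lra]. }
    assert (Hc' : continuity (opp_fct f)) by (apply continuity_opp; apply (cont_of f df Hd)).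
    destruct (IVT (opp_fct f) (tn n) t Hc' H) as [z [Hz1 Hz2]].
    + unfold opp_fct; lra.
    + unfold opp_fct; lra.
    + unfold opp_fct in Hz2. specialize (HT1 z ltac:(lra)). simpl in HT1.
      assert (f z = 0) by lra. rewrite H0 in HT1. nra.
Qed.

Lemma tends_seq g l tn : tends g l -> cv_infty tn -> Un_cv (fun n => g (tn n)) l.
Proof.
  intros Hg Htn eps Heps. destruct (Hg eps Heps) as [T HT]. destruct (Htn T) as [N HN].
  exists N. intros n Hn. unfold R_dist. apply Rabs_def1; apply HT; left; apply HN; lia.
Qed.

Lemma cv_const_seq (u : nat -> R) l : (forall n, u n = l) -> Un_cv u l.
Proof. intros H eps Heps. exists 0%nat. intros n _. unfold R_dist. rewrite H, Rminus_diag, Rabs_R0. lra. Qed.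

Lemma mono_limit F tn l : (forall a b, a <= b -> F a <= F b) -> cv_infty tn ->
  Un_cv (fun n => F (tn n)) l -> (forall t, F t <= l) /\ tends F l.
Proof.
  intros Fmono Htn Hl.
  assert (Fle: forall t, F t <= l).
  { intros t. destruct (Rle_dec (F t) l) as [|Hn]; auto. exfalso.
    destruct (Hl (F t - l)) as [N1 HN1]; [lra|].
    destruct (Htn t) as [N2 HN2].
    specialize (HN1 (max N1 N2) (Nat.le_max_l _ _)). specialize (HN2 (max N1 N2) (Nat.le_max_r _ _)).
    unfold R_dist in HN1. apply Rabs_def2 in HN1.
    assert (F t <= F (tn (max N1 N2))) by (apply Fmono; lra). lra. }
  split; auto. intros eps Heps. destruct (Hl eps Heps) as [N HN].
  exists (tn N). intros t Ht. specialize (HN N (le_n _)). unfold R_dist in HN.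
  apply Rabs_def2 in HN. specialize (Fle t). assert (F (tn N) <= F t) by (apply Fmono; lra). lra.
Qed.

Lemma grow_contra g dg T : (forall t, derivable_pt_lim g t (dg t)) ->
  (forall t, T <= t -> 0 <= g t * dg t) -> g T <> 0 -> (forall t, -1 <= g t <= 1) ->
  tends g 0 -> False.
Proof.
  intros Hd Hpos HT Hb Ht.
  assert (HT2 : 0 < g T * g T) by nra.
  destruct (Ht (g T * g T) HT2) as [T2 H2].
  set (u := Rmax T T2).
  assert (Hm : g T * g T <= g u * g u).
  { apply (mvt_mono (fun s => g s * g s) (fun s => 2 * g s * dg s)).
    - intro; apply dpl_sq; auto.
    - unfold u; apply Rmax_l.
    - intros s Hs. specialize (Hpos s (proj1 Hs)). nra. }
  specialize (H2 u (Rmax_r _ _)). pose proof (Hb T) as HbT. pose proof (Hb u) as Hbu. simpl in H2.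
  assert (g T * g T <= 1) by nra.
  assert (g u * g u < (g T * g T) * (g T * g T)) by nra.
  nra.
Qed.

Lemma omega_part x t0 : is_solution x -> SA (x t0) <> 0 -> SC (x t0) <> 0 ->
  forall p, omega_limit x p -> omega_arc p.
Proof.
  intros [Hs [HP0 [HA0 [HB0 HC0]]]] HAt0 HCt0 p [tn [Htn [cP [cA [cB cC]]]]].
  cbn [Sp SA SB SC kasner_field] in HP0, HA0, HB0, HC0.
  pose (P := fun s => Sp (x s)). pose (A := fun s => SA (x s)).
  pose (B := fun s => SB (x s)). pose (C := fun s => SC (x s)).
  pose (s3 := sqrt 3).
  assert (H33 : s3 * s3 = 3) by (apply sqrt_sqrt; lra).
  assert (Hs3 : 0 < s3) by (apply sqrt_lt_R0; lra).
  assert (Hs32 : s3 < 2) by nra.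
  assert (HP : forall t, derivable_pt_lim P t (3 * (A t * A t))).
  { intro t. unfold P, A. replace (3 * (SA (x t) * SA (x t))) with (3 * SA (x t) ^ 2) by ring. apply HP0. }
  assert (HA : forall t, derivable_pt_lim A t (- (3 * P t + s3 * B t) * A t)) by (intro t; apply HA0).
  assert (HB : forall t, derivable_pt_lim B t (s3 * (A t * A t) - 2 * s3 * (C t * C t))).
  { intro t. unfold B, A, C, s3. replace (sqrt 3 * (SA (x t) * SA (x t)) - 2 * sqrt 3 * (SC (x t) * SC (x t)))
      with (sqrt 3 * SA (x t) ^ 2 - 2 * sqrt 3 * SC (x t) ^ 2) by ring. apply HB0. }
  assert (HC : forall t, derivable_pt_lim C t (2 * s3 * B t * C t)) by (intro t; apply HC0).
  assert (Hsph : forall t, P t * P t + A t * A t + B t * B t + C t * C t = 1).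
  { intro t. pose proof (Hs t) as H. unfold on_sphere in H. unfold P, A, B, C. nra. }
  assert (Hbd : forall t, (-1 <= P t <= 1) /\ (-1 <= A t <= 1) /\ (-1 <= B t <= 1) /\ (-1 <= C t <= 1)).
  { intro t. pose proof (Hsph t). repeat split; nra. }
  change (Un_cv (fun n => P (tn n)) (Sp p)) in cP.
  change (Un_cv (fun n => A (tn n)) (SA p)) in cA.
  change (Un_cv (fun n => B (tn n)) (SB p)) in cB.
  change (Un_cv (fun n => C (tn n)) (SC p)) in cC.
  change (A t0 <> 0) in HAt0. change (C t0 <> 0) in HCt0.
  assert (Es3 : s3 = sqrt 3) by reflexivity.
  clearbody P A B C s3. clear HP0 HA0 HB0 HC0 Hs.
  assert (HAnz : forall t, t0 <= t -> A t <> 0).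
  { apply (nonvanish A _ 12 t0 HA); auto. intros t _. destruct (Hbd t) as [[? ?] [_ [[? ?] _]]].
    assert (3 * P t + s3 * B t <= 6) by nra. nra. }
  assert (HCnz : forall t, t0 <= t -> C t <> 0).
  { apply (nonvanish C _ 12 t0 HC); auto. intros t _. destruct (Hbd t) as [_ [_ [[? ?] _]]].
    assert (-2 <= s3 * B t) by nra. nra. }
  assert (Pmono : forall a b, a <= b -> P a <= P b).
  { intros a b Hab. apply (mvt_mono P (fun t => 3 * (A t * A t))); auto. intros; nra. }
  destruct (mono_limit P tn (Sp p) Pmono Htn cP) as [Ple Ptends].
  assert (Atends : tends A 0).
  { apply (barbalat P A _ 3 6 tn (Sp p) HP ltac:(lra) HA); auto; [|lra].
    intro t. destruct (Hbd t) as [[? ?] [[? ?] [[? ?] _]]].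
    assert (-5 <= 3 * P t + s3 * B t <= 5) by (split; nra). split; nra. }
  assert (Ctends : tends C 0).
  { apply (barbalat (fun t => P t - s3 * B t) C (fun t => 2 * s3 * B t * C t) 6 6 tn (Sp p - s3 * SB p)); auto; try lra.
    - intro t. apply (dpl_ext (minus_fct P (mult_real_fct s3 B))). { intros; reflexivity. }
      replace (6 * (C t * C t)) with (3 * (A t * A t) - s3 * (s3 * (A t * A t) - 2 * s3 * (C t * C t))) by (rewrite ?Rmult_assoc; nra).
      apply derivable_pt_lim_minus; auto. apply derivable_pt_lim_scal; auto.
    - intro t. destruct (Hbd t) as [_ [_ [[? ?] [? ?]]]]. assert (-2 <= s3 * B t <= 2) by (split; nra). split; nra.
    - apply CV_minus; auto. apply (CV_mult (fun _ => s3)); auto. apply cv_const_seq; auto. }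
  assert (HSA : SA p = 0) by (apply (UL_sequence (fun n => A (tn n))); auto; apply tends_seq; auto).
  assert (HSC : SC p = 0) by (apply (UL_sequence (fun n => C (tn n))); auto; apply tends_seq; auto).
  set (L := Sp p) in *. set (s := SB p) in *.
  assert (Hcirc : L * L + s * s = 1).
  { assert (H1 : Un_cv (fun n => P (tn n) * P (tn n) + A (tn n) * A (tn n) + B (tn n) * B (tn n) + C (tn n) * C (tn n))
                 (L * L + SA p * SA p + s * s + SC p * SC p)).
    { repeat apply CV_plus; apply CV_mult; auto. }
    assert (H2 : Un_cv (fun n => P (tn n) * P (tn n) + A (tn n) * A (tn n) + B (tn n) * B (tn n) + C (tn n) * C (tn n)) 1)
      by (apply cv_const_seq; intro; apply Hsph).
    rewrite HSA, HSC in H1. assert (E := UL_sequence _ _ _ H1 H2). lra. }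
  assert (Btends2 : tends (fun t => B t * B t) (s * s)).
  { intros eps Heps.
    destruct (Ptends (eps/4)) as [T1 H1]; [lra|]. destruct (Atends (eps/4)) as [T2 H2]; [lra|].
    destruct (Ctends (eps/4)) as [T3 H3]; [lra|].
    exists (Rmax T1 (Rmax T2 T3)). intros t Ht.
    pose proof (Rmax_l T2 T3). pose proof (Rmax_r T2 T3). pose proof (Rmax_l T1 (Rmax T2 T3)).
    pose proof (Rmax_r T1 (Rmax T2 T3)).
    assert (T1 <= t) by lra. assert (T2 <= t) by lra. assert (T3 <= t) by lra.
    specialize (H1 t ltac:(auto)). specialize (H2 t ltac:(auto)). specialize (H3 t ltac:(auto)).
    pose proof (Hsph t). pose proof (Ple t). destruct (Hbd t) as [[? ?] [[? ?] [? [? ?]]]].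
    assert (-1 <= L <= 1) by (split; nra).
    assert (0 <= L - P t < eps / 4) by lra.
    assert (-2 <= L + P t <= 2) by lra.
    assert (- (eps / 2) < (L - P t) * (L + P t) < eps / 2) by (split; nra).
    assert (A t * A t < eps / 4) by nra. assert (C t * C t < eps / 4) by nra.
    split; nra. }
  assert (Hs0 : s <= 0).
  { destruct (Rle_dec s 0) as [|Hn]; auto. exfalso.
    destruct (sign_persist B _ s tn HB ltac:(lra) Btends2 Htn cB) as [T HT].
    apply (grow_contra C _ (Rmax T t0) HC); auto.
    - intros t Ht. pose proof (Rmax_l T t0). specialize (HT t ltac:(lra)).
      assert (0 <= C t * C t) by nra.
      replace (C t * (2 * s3 * B t * C t)) with (2 * s3 * B t * (C t * C t)) by ring.
      apply Rmult_le_pos; auto. nra.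
    - apply HCnz, Rmax_r.
    - intro t; apply Hbd. }
  assert (Hk : 0 <= 3 * L + s3 * s).
  { destruct (Rle_dec 0 (3 * L + s3 * s)) as [|Hk]; auto. exfalso.
    set (eta := - (3 * L + s3 * s) / (2 * s3)).
    assert (Heta : 0 < eta) by (unfold eta; apply Rdiv_lt_0_compat; lra).
    assert (Heta2 : s3 * eta = - (3 * L + s3 * s) / 2) by (unfold eta; field; lra).
    assert (HBev : exists T, forall t, T <= t -> B t < s + eta).
    { destruct (Req_dec s 0) as [Hs|Hs].
      - destruct (Btends2 (eta * eta)) as [T HT]; [nra|]. exists T. intros t Ht.
        specialize (HT t Ht). rewrite Hs in *. simpl in HT. nra.
      - assert (Hsn : s < 0) by lra.
        destruct (sign_persist (fun t => - B t) (fun t => - (s3 * (A t * A t) - 2 * s3 * (C t * C t))) (-s) tn) as [T HT].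
        + intro t. apply (dpl_ext (opp_fct B)). { intros; reflexivity. } apply derivable_pt_lim_opp; auto.
        + lra.
        + intros eps Heps. destruct (Btends2 eps Heps) as [T HT]. exists T. intros t Ht.
          specialize (HT t Ht). simpl in HT |- *. replace (- B t * - B t - - s * - s) with (B t * B t - s * s) by ring. exact HT.
        + exact Htn.
        + apply CV_opp in cB. exact cB.
        + destruct (Rle_dec 0 (s + eta)) as [Hp|Hp].
          * exists T. intros t Ht. specialize (HT t Ht). simpl in HT. lra.
          * destruct (Btends2 (s * s - (s + eta) * (s + eta))) as [T2 HT2]; [nra|].
            exists (Rmax T T2). intros t Ht. pose proof (Rmax_l T T2). pose proof (Rmax_r T T2).
            specialize (HT t ltac:(lra)). specialize (HT2 t ltac:(lra)). simpl in HT, HT2. nra. }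
    destruct HBev as [T HT].
    apply (grow_contra A _ (Rmax T t0) HA); auto.
    - intros t Ht. pose proof (Rmax_l T t0). specialize (HT t ltac:(lra)). pose proof (Ple t).
      assert (3 * P t + s3 * B t < 0) by nra.
      replace (A t * (- (3 * P t + s3 * B t) * A t)) with (- (3 * P t + s3 * B t) * (A t * A t)) by ring.
      apply Rmult_le_pos; nra.
    - apply HAnz, Rmax_r.
    - intro t; apply Hbd. }
  unfold omega_arc. fold L s. rewrite <- Es3.
  assert (HL0 : 0 <= L) by nra.
  assert (Hq : 0 <= - (s3 * s)) by nra.
  assert (Hq2 : 0 <= (3 * L - - (s3 * s)) * (3 * L + - (s3 * s))) by (apply Rmult_le_pos; lra).
  assert (H9 : 9 * (L * L) >= 3 * (s * s)).
  { replace (3 * (s * s)) with ((s3 * s) * (s3 * s)) by (rewrite <- H33; ring). nra. }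
  repeat split; auto.
  - simpl. lra.
  - assert (L * L >= 1/4) by nra. nra.
  - nra.
  - assert (s * s <= 3/4) by nra. nra.
Qed.

Lemma dpl_refl f t l : derivable_pt_lim f (-t) l -> derivable_pt_lim (fun s => f (-s)) t (- l).
Proof.
  intros H. apply (dpl_ext (comp f (fun s => -1 * s))). { intros; unfold comp; f_equal; ring. }
  replace (-l) with (l * -1) by ring.
  apply (derivable_pt_lim_comp (fun s => -1 * s) f t (-1) l). apply dpl_lin.
  replace (-1 * t) with (-t) by ring. exact H.
Qed.

Lemma dpl_refl2 f t l : derivable_pt_lim f (-t) l -> derivable_pt_lim (fun s => - f (-s)) t l.
Proof.
  intros H. apply (dpl_ext (opp_fct (fun s => f (-s)))). { intros; reflexivity. }
  replace l with (- - l) by ring. apply derivable_pt_lim_opp, dpl_refl, H.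
Qed.

Lemma cv_ext (u v : nat -> R) l : (forall n, u n = v n) -> Un_cv u l -> Un_cv v l.
Proof. intros E H eps He. destruct (H eps He) as [N HN]. exists N. intros n Hn. rewrite <- E. auto. Qed.

Lemma alpha_part x t0 : is_solution x -> SA (x t0) <> 0 -> SC (x t0) <> 0 ->
  forall p, alpha_limit x p -> alpha_arc p.
Proof.
  intros [Hs [HP0 [HA0 [HB0 HC0]]]] HAt0 HCt0 p [tn [Htn [cP [cA [cB cC]]]]].
  pose (y := fun t => mkState (- Sp (x (-t))) (SA (x (-t))) (- SB (x (-t))) (SC (x (-t)))).
  assert (Hy : is_solution y).
  { unfold is_solution, y; cbn [Sp SA SB SC kasner_field]. repeat split.
    - intro t. unfold on_sphere. cbn [Sp SA SB SC]. pose proof (Hs (-t)) as H. unfold on_sphere in H. nra.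
    - intro t. specialize (HP0 (-t)). cbn [Sp SA SB SC kasner_field] in HP0. apply dpl_refl2 in HP0. exact HP0.
    - intro t. specialize (HA0 (-t)). cbn [Sp SA SB SC kasner_field] in HA0. apply dpl_refl in HA0.
      match goal with |- derivable_pt_lim _ _ ?l => replace l with (- (- (3 * Sp (x (- t)) + sqrt 3 * SB (x (- t))) * SA (x (- t)))) by ring end.
      exact HA0.
    - intro t. specialize (HB0 (-t)). cbn [Sp SA SB SC kasner_field] in HB0. apply dpl_refl2 in HB0. exact HB0.
    - intro t. specialize (HC0 (-t)). cbn [Sp SA SB SC kasner_field] in HC0. apply dpl_refl in HC0.
      match goal with |- derivable_pt_lim _ _ ?l => replace l with (- (2 * sqrt 3 * SB (x (- t)) * SC (x (- t)))) by ring end.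
      exact HC0. }
  assert (Hw := omega_part y (-t0) Hy).
  unfold y in Hw; cbn [SA SC] in Hw. rewrite Ropp_involutive in Hw.
  specialize (Hw HAt0 HCt0 (mkState (- Sp p) (SA p) (- SB p) (SC p))).
  destruct Hw as [H1 [H2 [H3 [H4 H5]]]].
  - exists (fun n => - tn n). split; auto. unfold y; cbn [Sp SA SB SC].
    repeat split.
    + apply CV_opp in cP. refine (cv_ext _ _ _ _ cP). intro n. unfold opp_seq. rewrite Ropp_involutive. reflexivity.
    + refine (cv_ext _ _ _ _ cA). intro n. rewrite Ropp_involutive. reflexivity.
    + apply CV_opp in cB. refine (cv_ext _ _ _ _ cB). intro n. unfold opp_seq. rewrite Ropp_involutive. reflexivity.
    + refine (cv_ext _ _ _ _ cC). intro n. rewrite Ropp_involutive. reflexivity.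
  - cbn [Sp SA SB SC] in *. unfold alpha_arc. repeat split; try lra.
Qed.

Theorem mainTheorem5 (x : R -> state) (t0 : R) :
  is_solution x ->
  SA (x t0) * SC (x t0) <> 0 ->
  (forall p, alpha_limit x p -> alpha_arc p) /\
  (forall p, omega_limit x p -> omega_arc p).
Proof.
  intros Hx H.
  assert (HA : SA (x t0) <> 0) by (intro E; apply H; rewrite E; ring).
  assert (HC : SC (x t0) <> 0) by (intro E; apply H; rewrite E; ring).
  split; [apply (alpha_part x t0) | apply (omega_part x t0)]; auto.
Qed.
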